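(* Let $\sigma\in B_3$ and write $\sigma=(\sigma_1\sigma_2\sigma_1)^k w$ as in the definition of the rotation number, so $rot(\sigma)=k/4$. Then $$lk(\sigma)=12\, rot(\sigma)+lk(w)=12\, rot(\sigma)+\Phi(\bar\sigma).$$
   Context: $B_3$ is the braid group on three strands with standard generators $\sigma_1,\sigma_2$. The linking number $lk:B_3\to\mathbb{Z}$ is the exponent sum homomorphism: $lk(\sigma_{i_1}^{j_1}\cdots\sigma_{i_m}^{j_m})=j_1+\dots+j_m$. Let $\bar\sigma\in PSL(2,\mathbb{Z})$ be the image of $\sigma$ under $\sigma_1\mapsto \pm\begin{pmatrix}1&0\\-1&1\end{pmatrix}$, $\sigma_2\mapsto \pm\begin{pmatrix}1&1\\0&1\end{pmatrix}$. Rademacher function: with $A=\pm\begin{pmatrix}0&1\\-1&0\end{pmatrix}$, $B=\pm\begin{pmatrix}1&-1\\1&0\end{pmatrix}$, $PSL(2,\mathbb{Z})=\langle A\rangle *\langle B\rangle\cong\mathbb{Z}/2*\mathbb{Z}/3$, so every $g$ is uniquely $B^{r_1}AB^{r_2}A\cdots AB^{r_k}$ with $r_1,r_k\in\{-1,0,1\}$ and $r_i\in\{-1,1\}$ otherwise; $\Phi(g)=\sum_i r_i$. Rotation number: for $g=\pm\begin{pmatrix}\alpha&\beta\\ \gamma&\delta\end{pmatrix}$ put $a=\gamma/\alpha$, $b=\delta/\beta\in\mathbb{Q}\cup\{\infty\}$ ($\infty$ read as $\pm\infty$ as needed). For $g=\bar\sigma$ one of the following holds, and $\sigma$ is written uniquely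 as $(\sigma_1\sigma_2\sigma_1)^k w$ accordingly: (1) $0\le a<b\le+\infty$: $k$ even, $w$ a word in $\sigma_1^{-1},\sigma_2$ only; (2) $-\infty\le a<b\le 0$: $k$ odd, $w$ a word in $\sigma_1^{-1},\sigma_2$; (3) $0\le b<a\le+\infty$: $k$ odd, $w$ a word in $\sigma_1,\sigma_2^{-1}$; (4) $-\infty\le b<a\le 0$: $k$ even, $w$ a word in $\sigma_1,\sigma_2^{-1}$ (cases that overlap give the same $k$ and $w$). Then $rot(\sigma)=k/4$. *)

(* Defs.v *)
From HB Require Import structures.
From mathcomp Require Import all_boot all_order all_algebra.
Set Implicit Arguments. Unset Strict Implicit. Unset Printing Implicit Defensive.
Import Order.TTheory GRing.Theory Num.Theory.
Local Open Scope ring_scope.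

(** A letter: (gen, inv) with gen = false for sigma_1, true for sigma_2;
    inv = true means the inverse generator. *)
Definition letter := (bool * bool)%type.
Definition word := seq letter.

Definition s1 : letter := (false, false).
Definition s2 : letter := (true, false).
Definition s1inv : letter := (false, true).
Definition s2inv : letter := (true, true).
Definition linv (l : letter) : letter := (l.1, ~~ l.2).

(** Equality in B_3 = < s1, s2 | s1 s2 s1 = s2 s1 s2 >:
    the congruence generated by free cancellation and the braid relation. *)
Inductive breq : word -> word -> Prop :=
| breq_refl w : breq w w
| breq_sym u v : breq u v -> breq v u
| breq_trans u v x : breq u v -> breq v x -> breq u x
| breq_ctx u v x y : breq x y -> breq (u ++ x ++ v) (u ++ y ++ v)
| breq_cancel l : breq [:: l; linv l] [::]
| breq_braid : breq [:: s1; s2; s1] [:: s2; s1; s2].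

(** Linking number = exponent sum. *)
Definition lk_letter (l : letter) : int := if l.2 then -1 else 1.
Definition lk (w : word) : int := \sum_(l <- w) lk_letter l.

Definition Delta_pow (k : int) : word :=
  match k with
  | Posz n => flatten (nseq n [:: s1; s2; s1])
  | Negz n => flatten (nseq n.+1 [:: s1inv; s2inv; s1inv])
  end.

Definition mx2 (a b c d : int) : 'M[int]_2 :=
  \matrix_(i < 2, j < 2)
    if i == 0 then (if j == 0 then a else b) else (if j == 0 then c else d).

(** Image in SL(2,Z) (representing PSL(2,Z) up to sign). *)
Definition letter_mx (l : letter) : 'M[int]_2 :=
  match l with
  | (false, false) => mx2 1 0 (-1) 1
  | (false, true)  => mx2 1 0 1 1
  | (true, false)  => mx2 1 1 0 1
  | (true, true)   => mx2 1 (-1) 0 1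
  end.
Definition bar (w : word) : 'M[int]_2 := foldr (fun l M => letter_mx l *m M) 1%:M w.

Definition psl_eq (M N : 'M[int]_2) : Prop := M = N \/ M = - N.

(** Rademacher function: A, B and the normal form B^{r1} A B^{r2} A ... A B^{rk}. *)
Definition Amx : 'M[int]_2 := mx2 0 1 (-1) 0.
Definition Bmx : 'M[int]_2 := mx2 1 (-1) 1 0.
Definition Binvmx : 'M[int]_2 := mx2 0 1 (-1) 1.
Definition Bpow (r : int) : 'M[int]_2 :=
  if r == 0 then 1%:M else if r == 1 then Bmx else Binvmx.

Fixpoint evalNF (rs : seq int) : 'M[int]_2 :=
  match rs with
  | [::] => 1%:M
  | [:: r] => Bpow r
  | r :: rs' => Bpow r *m Amx *m evalNF rs'
  end.

Definition is_nf (rs : seq int) : Prop :=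
  [/\ (0 < size rs)%N,
      all (fun r => r \in [:: -1; 0; 1]) rs &
      forall i, (0 < i)%N -> (i < (size rs).-1)%N -> nth 0 rs i != 0].

(** Phi g = n : the sum of the exponents of the (unique) normal form of g. *)
Definition Phi_eq (g : 'M[int]_2) (n : int) : Prop :=
  forall rs, is_nf rs -> psl_eq (evalNF rs) g -> n = \sum_(r <- rs) r.

(** a = gamma/alpha, b = delta/beta in Q u {oo}; None stands for oo. *)
Definition ratio (num den : int) : option rat :=
  if den == 0 then None else Some (num%:~R / den%:~R).
Definition a_of (M : 'M[int]_2) := ratio (M 1 0) (M 0 0).
Definition b_of (M : 'M[int]_2) := ratio (M 1 1) (M 0 1).

Definition case1 (a b : option rat) : Prop :=
  exists2 x, a = Some x & 0 <= x /\ (b = None \/ exists2 y, b = Some y & x < y).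
Definition case2 (a b : option rat) : Prop :=
  exists2 y, b = Some y & y <= 0 /\ (a = None \/ exists2 x, a = Some x & x < y).
Definition case3 (a b : option rat) : Prop :=
  exists2 y, b = Some y & 0 <= y /\ (a = None \/ exists2 x, a = Some x & y < x).
Definition case4 (a b : option rat) : Prop :=
  exists2 x, a = Some x & x <= 0 /\ (b = None \/ exists2 y, b = Some y & y < x).

Definition in_alph1 (w : word) : bool := all (fun l => (l == s1inv) || (l == s2)) w.
Definition in_alph2 (w : word) : bool := all (fun l => (l == s1) || (l == s2inv)) w.

Definition rot_decomp (s : word) (k : int) (w : word) : Prop :=
  breq s (Delta_pow k ++ w) /\
  (let a := a_of (bar s) in let b := b_of (bar s) in
   [\/ [/\ case1 a b, ~~ odd `|k|%N & in_alph1 w],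
       [/\ case2 a b, odd `|k|%N & in_alph1 w],
       [/\ case3 a b, odd `|k|%N & in_alph2 w] |
       [/\ case4 a b, ~~ odd `|k|%N & in_alph2 w]]).

Definition rot_of (k : int) : rat := k%:~R / 4%:R.

(* Main.v *)
Require Import Defs.
From mathcomp Require Import all_boot all_order all_algebra.
From mathcomp Require Import zify ring lra.
Import Order.TTheory GRing.Theory Num.Theory.
Local Open Scope ring_scope.
Set Implicit Arguments. Unset Strict Implicit.

Lemma mx2_mul (a b c d a' b' c' d' : int) : mx2 a b c d *m mx2 a' b' c' d' =
  mx2 (a*a'+b*c') (a*b'+b*d') (c*a'+d*c') (c*b'+d*d').
Proof.
apply/matrixP => i j; rewrite /mx2 !mxE !big_ord_recl big_ord0 !mxE.
by case: i => [[|[|//]] ?]; case: j => [[|[|//]] ?] /=; rewrite addr0.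
Qed.

Lemma mx2_inj (a b c d a' b' c' d' : int) : mx2 a b c d = mx2 a' b' c' d' ->
  [/\ a = a', b = b', c = c' & d = d'].
Proof.
move=> H.
have h00 := congr1 (fun M : 'M[int]_2 => M 0 0) H.
have h01 := congr1 (fun M : 'M[int]_2 => M 0 1) H.
have h10 := congr1 (fun M : 'M[int]_2 => M 1 0) H.
have h11 := congr1 (fun M : 'M[int]_2 => M 1 1) H.
by move: h00 h01 h10 h11; rewrite /mx2 !mxE /=.
Qed.

Lemma mx2_opp (a b c d : int) : - mx2 a b c d = mx2 (-a) (-b) (-c) (-d).
Proof.
apply/matrixP => i j; rewrite /mx2 !mxE.
by case: i => [[|[|//]] ?]; case: j => [[|[|//]] ?].
Qed.

Lemma one_mx2 : (1%:M : 'M[int]_2) = mx2 1 0 0 1.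
Proof.
apply/matrixP => i j; rewrite /mx2 !mxE.
by case: i => [[|[|//]] ?]; case: j => [[|[|//]] ?].
Qed.

Ltac mxcomp := rewrite ?one_mx2 ?mx2_opp ?mx2_mul; congr mx2; lia.

Lemma psl_refl M : psl_eq M M. Proof. by left. Qed.
Lemma psl_sym M N : psl_eq M N -> psl_eq N M.
Proof. by case=> ->; [left|right; rewrite opprK]. Qed.
Lemma psl_trans M N K : psl_eq M N -> psl_eq N K -> psl_eq M K.
Proof. by case=> ->; case=> ->; [left|right|right|left; rewrite opprK]. Qed.
Lemma psl_mulr M N K : psl_eq M N -> psl_eq (M *m K) (N *m K).
Proof. by case=> ->; [left|right; rewrite mulNmx]. Qed.
Lemma psl_mull K M N : psl_eq M N -> psl_eq (K *m M) (K *m N).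
Proof. by case=> ->; [left|right; rewrite mulmxN]. Qed.
Lemma psl_oppr M N : psl_eq M N -> psl_eq M (- N).
Proof. by case=> ->; [right; rewrite opprK|left]. Qed.
Lemma psl_eqE M N : M = N -> psl_eq M N. Proof. by move=> ->; left. Qed.

Lemma psl_cancelr M N K Kinv : psl_eq (K *m Kinv) 1%:M ->
  psl_eq (M *m K) (N *m K) -> psl_eq M N.
Proof.
move=> HK H.
have H1 := psl_mulr Kinv H. rewrite -!mulmxA in H1.
have HM := psl_mull M HK; have HN := psl_mull N HK.
rewrite mulmx1 in HM; rewrite mulmx1 in HN.
exact: psl_trans (psl_sym HM) (psl_trans H1 HN).
Qed.
Lemma psl_cancell M N K Kinv : psl_eq (Kinv *m K) 1%:M ->
  psl_eq (K *m M) (K *m N) -> psl_eq M N.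
Proof.
move=> HK H.
have H1 := psl_mull Kinv H. rewrite !mulmxA in H1.
have HM := psl_mulr M HK; have HN := psl_mulr N HK.
rewrite mul1mx in HM; rewrite mul1mx in HN.
exact: psl_trans (psl_sym HM) (psl_trans H1 HN).
Qed.

Lemma bar_nil : bar [::] = 1%:M. Proof. by []. Qed.
Lemma bar_cons l u : bar (l :: u) = letter_mx l *m bar u. Proof. by []. Qed.
Lemma bar_cat u v : bar (u ++ v) = bar u *m bar v.
Proof. elim: u => [|l u IH]; first by rewrite mul1mx. by rewrite cat_cons !bar_cons IH mulmxA. Qed.

Lemma lk_cat u v : lk (u ++ v) = lk u + lk v.
Proof. by rewrite /lk big_cat. Qed.

Lemma breq_bar u v : breq u v -> bar u = bar v.
Proof.
elim=> [//|? ? _ ->//|? ? ? _ -> _ ->//|u' v' x y _ H| |].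
- by rewrite !bar_cat H.
- by case=> [[] []]; rewrite /linv !bar_cons bar_nil /=; mxcomp.
- by rewrite !bar_cons bar_nil /=; mxcomp.
Qed.

Lemma breq_lk u v : breq u v -> lk u = lk v.
Proof.
elim=> [//|? ? _ ->//|? ? ? _ -> _ ->//|u' v' x y _ H| |].
- by rewrite !lk_cat H.
- by case=> [[] []]; rewrite /lk /linv !big_cons big_nil /lk_letter /=.
- by rewrite /lk !big_cons big_nil /lk_letter /=.
Qed.

Definition Aexp (e : bool) : 'M[int]_2 := if e then Amx else 1%:M.

Lemma AA : Amx *m Amx = - 1%:M. Proof. rewrite /Amx; mxcomp. Qed.

Lemma bar_nseq D n : psl_eq (bar D) Amx ->
  psl_eq (bar (flatten (nseq n D))) (Aexp (odd n)).
Proof.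
move=> HD; elim: n => [|n IH]; first by left.
rewrite /= bar_cat.
apply: psl_trans (psl_mulr _ HD) _.
apply: psl_trans (psl_mull _ IH) _.
case: (odd n); rewrite /Aexp /=.
- by rewrite AA; right.
- by left; rewrite /Amx; mxcomp.
Qed.

Lemma lk_nseq D n : lk (flatten (nseq n D)) = (n%:Z * lk D).
Proof.
elim: n => [|n IH]; first by rewrite /lk big_nil mul0r.
by rewrite /= lk_cat IH -addn1 PoszD mulrDl mul1r addrC.
Qed.

Lemma bar_Delta k : psl_eq (bar (Delta_pow k)) (Aexp (odd `|k|%N)).
Proof.
case: k => n; apply: bar_nseq.
- by left; rewrite !bar_cons bar_nil /=; mxcomp.
- by right; rewrite !bar_cons bar_nil /= /Amx; mxcomp.
Qed.

Lemma lk_Delta k : lk (Delta_pow k) = 3 * k.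
Proof.
case: k => n; rewrite /Delta_pow lk_nseq /lk !big_cons big_nil /lk_letter /=.
- lia.
- rewrite NegzE. lia.
Qed.

Lemma part1 s k w : breq s (Delta_pow k ++ w) ->
  ((lk s)%:~R : rat) = 12%:R * rot_of k + (lk w)%:~R.
Proof.
move/breq_lk; rewrite lk_cat lk_Delta => ->.
rewrite /rot_of rmorphD rmorphM /=.
by field.
Qed.

Definition Um : 'M[int]_2 := mx2 1 0 (-1) 1.
Definition Vm : 'M[int]_2 := mx2 1 (-1) 0 1.
Definition Xm (m : int) := if m == 1 then Um else Vm.
Definition Pm (ms : seq int) := foldr (fun m M => Xm m *m M) 1%:M ms.
Definition Qm (t : seq int) := foldr (fun x M => Amx *m Bpow x *m M) 1%:M t.
Definition Gm r ms e := Bpow r *m Pm ms *m Aexp e.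
Definition pm1 (x : int) := x \in [:: -1; 1].

Lemma evalNF_cons r t : evalNF (r :: t) = Bpow r *m Qm t.
Proof.
elim: t r => [|x t IH] r; first by rewrite /= mulmx1.
have -> : evalNF [:: r, x & t] = Bpow r *m Amx *m evalNF (x :: t) by [].
by rewrite IH /= !mulmxA.
Qed.

Lemma Qm_Pm t : all pm1 t -> psl_eq (Qm t) (Pm t).
Proof.
elim: t => [|x t IH] /=; first by left.
case/andP => Hx /IH H.
apply: psl_trans (psl_mull _ H) _.
apply: psl_mulr.
move: Hx; rewrite /pm1 !inE => /orP [] /eqP -> /=.
- by right; rewrite /Amx /Binvmx /Xm /Vm /=; mxcomp.
- by left; rewrite /Amx /Bmx /Xm /Um /=; mxcomp.
Qed.

Lemma Qm_rcons t z : Qm (rcons t z) = Qm t *m (Amx *m Bpow z).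
Proof.
elim: t => [|x t IH] /=; first by rewrite mul1mx mulmx1.
by rewrite IH !mulmxA.
Qed.

Lemma sum_rcons (t : seq int) z : \sum_(x <- rcons t z) x = \sum_(x <- t) x + z.
Proof. by rewrite -cats1 big_cat big_seq1. Qed.

Lemma pm1_of (z : int) : z \in [:: -1; 0; 1] -> z != 0 -> pm1 z.
Proof. by rewrite /pm1 !inE => /or3P [] /eqP ->. Qed.

Lemma nf_decomp rs : is_nf rs -> exists r ms e,
  [/\ r \in [:: -1; 0; 1], all pm1 ms, psl_eq (evalNF rs) (Gm r ms e) &
      \sum_(x <- rs) x = r + \sum_(x <- ms) x].
Proof.
case=> Hsz Hall Hmid.
case: rs Hsz Hall Hmid => [//|r t] _ Hall0 Hmid.
have /andP [Hr Hall] : (r \in [:: -1; 0; 1]) && all (fun r => r \in [:: -1; 0; 1]) t := Hall0.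
clear Hall0; case/lastP: t Hall Hmid => [|t z] Hall Hmid.
  exists r, [::], false; split => //.
    by left; rewrite /Gm /Aexp /= !mulmx1.
  by rewrite big_seq1 big_nil addr0.
have Ht : all pm1 t.
  apply/(all_nthP 0) => i Hi.
  have := Hmid i.+1 isT; rewrite /= size_rcons ltnS => /(_ Hi) /=.
  rewrite nth_rcons Hi => Hnz.
  move: Hall; rewrite all_rcons => /andP [_ /(all_nthP 0) /(_ i Hi)].
  by rewrite /pm1 !inE (negbTE Hnz) /=.
move: Hall; rewrite all_rcons => /andP [Hz _].
have [z0|zn0] := eqVneq z 0.
  exists r, t, true; split => //.
    rewrite evalNF_cons Qm_rcons z0 /Gm /Aexp /Bpow eqxx mulmx1 mulmxA.
    by apply: psl_mulr; apply: psl_mull; apply: Qm_Pm.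
  by rewrite big_cons sum_rcons z0 addr0.
exists r, (rcons t z), false; split => //.
    by rewrite all_rcons Ht andbT pm1_of.
  rewrite evalNF_cons /Gm /Aexp mulmx1.
  apply: psl_mull; apply: Qm_Pm.
  by rewrite all_rcons Ht andbT pm1_of.
by rewrite big_cons.
Qed.

Definition shape (M : 'M[int]_2) (a b c d : int) :=
  [/\ 0 <= a, 0 <= b, 0 <= c, 0 <= d & a * d - b * c = 1] /\ M = mx2 a (-b) (-c) d.

Lemma Pm_shape ms : all pm1 ms -> exists a b c d, shape (Pm ms) a b c d.
Proof.
elim: ms => [|m ms IH] /=.
  by exists 1, 0, 0, 1; split; [by []|by rewrite one_mx2].
case/andP => Hm /IH [a [b [c [d [[Ha Hb Hc Hd Hdet] ->]]]]].
move: Hm; rewrite /pm1 !inE => /orP [] /eqP -> /=.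
- exists (a + c), (b + d), c, d; split; first (split; lia).
  by rewrite /Xm /Vm /=; mxcomp.
- exists a, b, (a + c), (b + d); split; first (split; lia).
  by rewrite /Xm /Um /=; mxcomp.
Qed.

Definition Xinv (m : int) : 'M[int]_2 := if m == 1 then mx2 1 0 1 1 else mx2 1 1 0 1.
Lemma Xm_inv m : pm1 m -> psl_eq (Xinv m *m Xm m) 1%:M.
Proof.
by rewrite /pm1 !inE => /orP [] /eqP -> /=; left; rewrite /Xinv /Xm /Um /Vm /=; mxcomp.
Qed.

Lemma Pm_free ms ms' : all pm1 ms -> all pm1 ms' -> psl_eq (Pm ms) (Pm ms') -> ms = ms'.
Proof.
elim: ms ms' => [|m ms IH] [|m' ms'] //=.
- move=> _ /andP [Hm' /Pm_shape [a [b [c [d [[Ha Hb Hc Hd Hdet] ->]]]]]].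
  move: Hm'; rewrite /pm1 !inE => /orP [] /eqP -> /=; rewrite /Xm /Um /Vm /= one_mx2 mx2_mul;
  case; rewrite ?mx2_opp => /mx2_inj [*]; lia.
- move=> /andP [Hm /Pm_shape [a [b [c [d [[Ha Hb Hc Hd Hdet] ->]]]]]] _.
  move: Hm; rewrite /pm1 !inE => /orP [] /eqP -> /=; rewrite /Xm /Um /Vm /= one_mx2 mx2_mul;
  case; rewrite ?mx2_opp => /mx2_inj [*]; lia.
move=> /andP [Hm Hms] /andP [Hm' Hms'] H.
have [e|ne] := eqVneq m m'.
  subst m'; congr cons; apply: IH => //.
  exact: psl_cancell (Xm_inv Hm) H.
exfalso.
move: H.
have [a [b [c [d [[Ha Hb Hc Hd Hdet] ->]]]]] := Pm_shape Hms.
have [a' [b' [c' [d' [[Ha' Hb' Hc' Hd' Hdet'] ->]]]]] := Pm_shape Hms'.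
move: Hm Hm' ne; rewrite /pm1 !inE => /orP [] /eqP -> /orP [] /eqP -> /eqP ne; try by exfalso; apply: ne.
all: rewrite /Xm /Um /Vm /= !mx2_mul; case; rewrite ?mx2_opp => /mx2_inj [*]; nia.
Qed.

Definition Gf (r : int) (e : bool) (a b c d : int) : 'M[int]_2 :=
  if e then (if r == 0 then mx2 b a (-d) (-c) else if r == 1 then mx2 (b+d) (a+c) b a
             else mx2 (-d) (-c) (-(b+d)) (-(a+c)))
  else (if r == 0 then mx2 a (-b) (-c) d else if r == 1 then mx2 (a+c) (-(b+d)) a (-b)
        else mx2 (-c) d (-(a+c)) (b+d)).

Lemma G_Gf r e a b c d : r \in [:: -1; 0; 1] ->
  Bpow r *m mx2 a (-b) (-c) d *m Aexp e = Gf r e a b c d.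
Proof.
rewrite !inE => /or3P [] /eqP ->; case: e;
  rewrite /Gf /Bpow /Aexp /Amx /Bmx /Binvmx /=; mxcomp.
Qed.

Lemma Gf_uniq r e a b c d r' e' a' b' c' d' :
  r \in [:: -1; 0; 1] -> r' \in [:: -1; 0; 1] ->
  [/\ 0 <= a, 0 <= b, 0 <= c, 0 <= d & a * d - b * c = 1] ->
  [/\ 0 <= a', 0 <= b', 0 <= c', 0 <= d' & a' * d' - b' * c' = 1] ->
  psl_eq (Gf r e a b c d) (Gf r' e' a' b' c' d') -> r = r' /\ e = e'.
Proof.
move=> Hr Hr' [Ha Hb Hc Hd Hdet] [Ha' Hb' Hc' Hd' Hdet'].
move: Hr Hr'; rewrite !inE => /or3P [] /eqP -> /or3P [] /eqP ->; case: e; case: e';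
  rewrite /Gf /=; try by [].
all: case; rewrite ?mx2_opp => /mx2_inj [*]; try (timeout 3 nia).
all: try have ha : a = 0 by lia.
all: try have hb : b = 0 by lia.
all: try have hc : c = 0 by lia.
all: try have hd : d = 0 by lia.
all: try have ha' : a' = 0 by lia.
all: try have hb' : b' = 0 by lia.
all: try have hc' : c' = 0 by lia.
all: try have hd' : d' = 0 by lia.
all: subst; nia.
Qed.

Definition Binv_of (r : int) : 'M[int]_2 :=
  if r == 0 then 1%:M else if r == 1 then Binvmx else Bmx.

Lemma Bpow_inv r : r \in [:: -1; 0; 1] -> psl_eq (Binv_of r *m Bpow r) 1%:M.
Proof.
by rewrite !inE => /or3P [] /eqP -> /=; left; rewrite /Binv_of /Bpow /Bmx /Binvmx /=; mxcomp.
Qed.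

Lemma Aexp_inv e : psl_eq (Aexp e *m Aexp e) 1%:M.
Proof. by case: e; rewrite /Aexp /=; [right; rewrite AA| left; rewrite mulmx1]. Qed.

Lemma Gm_uniq r ms e r' ms' e' : r \in [:: -1; 0; 1] -> r' \in [:: -1; 0; 1] ->
  all pm1 ms -> all pm1 ms' -> psl_eq (Gm r ms e) (Gm r' ms' e') ->
  [/\ r = r', e = e' & ms = ms'].
Proof.
move=> Hr Hr' Hms Hms' H.
have [a [b [c [d [Hs HP]]]]] := Pm_shape Hms.
have [a' [b' [c' [d' [Hs' HP']]]]] := Pm_shape Hms'.
have := H; rewrite /Gm HP HP' !G_Gf // => /(Gf_uniq Hr Hr' Hs Hs') [er ee].
subst r' e'; split => //.
apply: Pm_free => //.
apply: (psl_cancell (Bpow_inv Hr)).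
apply: (psl_cancelr (Aexp_inv e)).
exact: H.
Qed.

Definition Rm (t : seq int) := foldr (fun x M => Bpow x *m Amx *m M) 1%:M t.

Lemma Rm_cons x t : Rm (x :: t) = Bpow x *m Qm t *m Amx.
Proof.
elim: t x => [|y t IH] x; first by rewrite /Rm /Qm /= !mulmx1.
have -> : Rm [:: x, y & t] = Bpow x *m Amx *m Rm (y :: t) by [].
by rewrite IH /Qm /= -/(Qm t) !mulmxA.
Qed.

Lemma A_Rm t : Amx *m Rm t = Qm t *m Amx.
Proof.
elim: t => [|x t IH]; first by rewrite /Rm /Qm /= mulmx1 mul1mx.
have -> : Rm (x :: t) = Bpow x *m Amx *m Rm t by [].
by rewrite -[Bpow x *m Amx *m Rm t]mulmxA IH /Qm /= -/(Qm t) !mulmxA.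
Qed.

Lemma all_lk w : all pm1 (map lk_letter w).
Proof. by elim: w => [|[? []] w IH] //=; rewrite IH. Qed.

Lemma lk_map w : lk w = \sum_(x <- map lk_letter w) x.
Proof. by rewrite /lk big_map. Qed.

Lemma alph2_Pm w : in_alph2 w -> Pm (map lk_letter w) = bar w.
Proof.
elim: w => [|l w IH] //= /andP [Hl /IH ->].
by case: l Hl => [[] []].
Qed.

Lemma alph1_Rm w : in_alph1 w -> psl_eq (bar w) (Rm (map lk_letter w)).
Proof.
elim: w => [|l w IH]; first by left.
case/andP => Hl /IH H; rewrite bar_cons.
apply: psl_trans (psl_mull _ H) _.
change (Rm (map lk_letter (l :: w))) with (Bpow (lk_letter l) *m Amx *m Rm (map lk_letter w)); apply: psl_mulr.
case: l Hl => [[] []] //= _.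
- by left; rewrite /Bpow /= /Bmx /Amx; mxcomp.
- by right; rewrite /Bpow /= /Binvmx /Amx mx2_mul mx2_opp; congr mx2; lia.
Qed.

Definition rep (M : 'M[int]_2) (n : int) := exists r ms e,
  [/\ r \in [:: -1; 0; 1], all pm1 ms, psl_eq M (Gm r ms e) & n = r + \sum_(x <- ms) x].

Lemma rep_alph2 o w : in_alph2 w -> rep (Aexp o *m bar w) (lk w).
Proof.
move=> H; rewrite -(alph2_Pm H) lk_map.
case: o; rewrite /Aexp.
- case E: (map lk_letter w) => [|m ms].
    exists 0, [::], true; split => //; first by left; rewrite /Gm /Aexp /= mulmx1 !mul1mx.
    by rewrite big_nil.
  have := all_lk w; rewrite E /= => /andP [Hm Hms].
  exists m, ms, false; split => //.
  + by move: Hm; rewrite /pm1 !inE => /orP [] ->; rewrite ?orbT.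
  + rewrite /Gm /Aexp mulmx1 /= mulmxA; apply: psl_mulr.
    move: Hm; rewrite /pm1 !inE => /orP [] /eqP -> /=.
    * by left; rewrite /Xm /Vm /Amx /Bpow /Binvmx /=; mxcomp.
    * by right; rewrite /Xm /Um /Amx /Bpow /Bmx /=; mxcomp.
  + by rewrite big_cons.
- exists 0, (map lk_letter w), false; split => //.
  + exact: all_lk.
  + by left; rewrite /Gm /Aexp /= !mulmx1 !mul1mx.
  + by rewrite add0r.
Qed.

Lemma rep_alph1 o w : in_alph1 w -> rep (Aexp o *m bar w) (lk w).
Proof.
move=> H; have HR := psl_mull (Aexp o) (alph1_Rm H).
rewrite lk_map.
case: o HR; rewrite /Aexp => HR.
- exists 0, (map lk_letter w), true; split => //.
  + exact: all_lk.
  + apply: psl_trans HR _; rewrite A_Rm /Gm /Aexp /= mul1mx.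
    apply: psl_mulr; apply: Qm_Pm; exact: all_lk.
  + by rewrite add0r.
- rewrite mul1mx in HR *.
  case E: (map lk_letter w) HR => [|m ms] HR.
    exists 0, [::], false; split => //.
      by apply: psl_trans HR _; left; rewrite /Gm /Aexp /Bpow /= !mulmx1.
    by rewrite big_nil addr0.
  have := all_lk w; rewrite E /= => /andP [Hm Hms].
  exists m, ms, true; split => //.
  + by move: Hm; rewrite /pm1 !inE => /orP [] ->; rewrite ?orbT.
  + apply: psl_trans HR _; rewrite Rm_cons /Gm /Aexp /=.
    rewrite mul1mx; apply: psl_mulr; apply: psl_mull; exact: Qm_Pm.
  + by rewrite big_cons.
Qed.

Theorem theorem2p1 (s : word) (k : int) (w : word) :
  rot_decomp s k w ->
  ((lk s)%:~R : rat) = 12%:R * rot_of k + (lk w)%:~R /\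
  Phi_eq (bar s) (lk w).
Proof.
case=> Hb Hcase; split; first exact: part1 Hb.
have Hbar : psl_eq (bar s) (Aexp (odd `|k|%N) *m bar w).
  by rewrite (breq_bar Hb) bar_cat; apply: psl_mulr; apply: bar_Delta.
have [r0 [ms0 [e0 [Hr0 Hms0 HG0 Hlk]]]] : rep (Aexp (odd `|k|%N) *m bar w) (lk w).
  by case: Hcase => [] [_ _ H]; [apply: rep_alph1|apply: rep_alph1|apply: rep_alph2|apply: rep_alph2].
move=> rs Hnf Hev.
have [r [ms [e [Hr Hms HG Hsum]]]] := nf_decomp Hnf.
have HH : psl_eq (Gm r ms e) (Gm r0 ms0 e0).
  apply: psl_trans (psl_sym HG) _.
  apply: psl_trans Hev _.
  exact: psl_trans Hbar HG0.
have [Er Ee Ems] := Gm_uniq Hr Hr0 Hms Hms0 HH.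
by rewrite Hsum Hlk Er Ems.
Qed.
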